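(* Let $\phi(w)=aw+ib$ with $a>0$ and $b\in\mathbb{R}$. Then $C_\phi$ is an invertible operator on $H^2(\mathbb{C}_{+})$, and the following are equivalent: (1) $C_{\phi}$ is expansive on $H^2(\mathbb{C}_{+})$; (2) $C_{\phi}$ is uniformly expansive on $H^2(\mathbb{C}_{+})$; (3) $\phi$ is of hyperbolic type, i.e. $a\neq 1$.
   Context: $\mathbb{C}_{+}=\{w\in\mathbb{C}:\mathrm{Re}(w)>0\}$. $H^2(\mathbb{C}_{+})$ is the Hardy space of holomorphic $f$ on $\mathbb{C}_{+}$ with finite norm $\|f\|_2^2=\sup_{0<x<\infty}\frac{1}{\pi}\int_{-\infty}^{\infty}|f(x+iy)|^2\,dy$, and $C_\phi f=f\circ\phi$. For an invertible operator $T$ on a Banach space $X$ with unit sphere $S_X$: $T$ is expansive if for every $z\in S_X$ there is $n\in\mathbb{Z}$ with $\|T^nz\|\ge2$; $T$ is uniformly expansive if there exists $n\in\mathbb{N}$ such that for every $z\in S_X$, $\|T^nz\|\ge 2$ or $\|T^{-n}z\|\ge2$. *)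

(* Defs.v *)
From HB Require Import structures.
From mathcomp Require Import all_boot all_order all_algebra.
From mathcomp Require Import all_classical all_reals all_analysis.
From mathcomp.real_closed Require Import complex.
Set Implicit Arguments. Unset Strict Implicit. Unset Printing Implicit Defensive.
Import Order.TTheory GRing.Theory Num.Theory.
Local Open Scope ring_scope.
Local Open Scope classical_set_scope.

Section H2.
Variable R : realType.

Definition cabs (z : R[i]) : R := let: Complex x y := z in Num.sqrt (x ^+ 2 + y ^+ 2).

Definition holo_rhp (f : R[i] -> R[i]) : Prop :=
  forall w : R[i], 0 < complex.Re w ->
    exists L : R[i], forall eps : R, 0 < eps ->
      exists delta : R, 0 < delta /\
        forall h : R[i], h != 0 -> cabs h < delta ->
          cabs ((f (w + h) - f w) / h - L) < eps.

Definition H2norm2 (f : R[i] -> R[i]) : \bar R :=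
  ereal_sup [set (((pi : R)^-1)%:E *
                 \int[lebesgue_measure]_(y in [set: R])
                     ((cabs (f (Complex x y))) ^+ 2)%:E)%E
            | x in [set x : R | 0 < x]].

Definition H2 : set (R[i] -> R[i]) :=
  [set f | holo_rhp f /\ (H2norm2 f < +oo)%E].

Definition H2norm (f : R[i] -> R[i]) : R := Num.sqrt (fine (H2norm2 f)).

Definition Cop (phi : R[i] -> R[i]) (f : R[i] -> R[i]) : R[i] -> R[i] :=
  f \o phi.
End H2.

Section Ops.
Variables (A : Type) (K : pzRingType) (F : numDomainType).
Local Notation U := (A -> K).
Variables (X : set U) (N : U -> F).

Definition maps_into (T : U -> U) := forall f, X f -> X (T f).

Definition linear_on (T : U -> U) :=
  forall (c : K) f g, X f -> X g ->
    T (fun w => c * f w + g w) = (fun w => c * T f w + T g w).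

Definition bounded_on (T : U -> U) :=
  exists M : F, forall f, X f -> N (T f) <= M * N f.

Definition inverse_on (T S : U -> U) :=
  maps_into S /\ forall f, X f -> S (T f) = f /\ T (S f) = f.

Definition invertible_op (T : U -> U) :=
  [/\ maps_into T, linear_on T, bounded_on T &
      exists S, [/\ inverse_on T S, linear_on S & bounded_on S]].

Definition zpow (T S : U -> U) (n : int) : U -> U :=
  match n with
  | Posz k => iter k T
  | Negz k => iter k.+1 S
  end.

(* expansive: for every z in the unit sphere, some n in Z with ||T^n z|| >= 2
   (T^{-1} is the inverse of T on X, which is unique on X) *)
Definition expansive (T : U -> U) :=
  forall S, inverse_on T S ->
    forall z, X z -> N z = 1 -> exists n : int, 2 <= N (zpow T S n z).

Definition uniformly_expansive (T : U -> U) :=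
  forall S, inverse_on T S ->
    exists n : nat, forall z, X z -> N z = 1 ->
      2 <= N (iter n T z) \/ 2 <= N (iter n S z).
End Ops.

(* Main.v *)
Require Import Defs.
From HB Require Import structures.
From mathcomp Require Import all_boot all_order all_algebra.
From mathcomp Require Import all_classical all_reals all_analysis.
From mathcomp.real_closed Require Import complex.
From mathcomp Require Import ring lra measurable_realfun.
Import Order.TTheory GRing.Theory Num.Theory.
Import numFieldNormedType.Exports.
Set Implicit Arguments. Unset Strict Implicit. Unset Printing Implicit Defensive.
Local Open Scope ring_scope.
Section C.
Variable R : realType.
Local Open Scope complex_scope.
Lemma cabsE (z : R[i]) : cabs z = Normc.normc z.
Proof. by []. Qed.
Lemma cabsM (z w : R[i]) : cabs (z * w) = cabs z * cabs w.
Proof. exact: Normc.normcM. Qed.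
Lemma cabsV (z : R[i]) : cabs (z^-1) = (cabs z)^-1.
Proof. exact: Normc.normcV. Qed.
Lemma cabsD (z w : R[i]) : cabs (z + w) <= cabs z + cabs w.
Proof. exact: (@le_normcD R z w). Qed.
Lemma cabs_ge0 (z : R[i]) : 0 <= cabs z.
Proof. by case: z => x y; rewrite /cabs sqrtr_ge0. Qed.
Lemma cabs2 (x y : R) : cabs (Complex x y) ^+ 2 = x ^+ 2 + y ^+ 2.
Proof. by rewrite /cabs sqr_sqrtr // addr_ge0 // sqr_ge0. Qed.
Lemma cabs_Re (z : R[i]) : `|complex.Re z| <= cabs z.
Proof.
case: z => x y /=; rewrite -(sqrtr_sqr x) ler_sqrt ?addr_ge0 ?sqr_ge0 //.
by rewrite lerDl sqr_ge0.
Qed.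
Lemma cabsR (r : R) : cabs (r%:C) = `|r|.
Proof. by rewrite /cabs /= expr0n /= addr0 sqrtr_sqr. Qed.
Lemma cabsN (z : R[i]) : cabs (- z) = cabs z.
Proof. exact: (@normcN R z). Qed.
Lemma cabs0 : cabs (0 : R[i]) = 0.
Proof. exact: Normc.normc0. Qed.
Lemma cabs_eq0 (z : R[i]) : cabs z = 0 -> z = 0.
Proof. exact: Normc.eq0_normc. Qed.
Lemma compl_add (x y u v : R) : Complex x y + Complex u v = Complex (x + u) (y + v).
Proof. by []. Qed.
Lemma compl_mul (x y u v : R) : Complex x y * Complex u v = Complex (x * u - y * v) (x * v + y * u).
Proof. by []. Qed.
Lemma phiE (a b x y : R) : a%:C * Complex x y + Complex 0 b = Complex (a * x) (a * y + b).
Proof. by rewrite compl_mul compl_add !mul0r subr0 !addr0. Qed.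
Definition phiab (a b : R) (w : R[i]) : R[i] := a%:C * w + Complex 0 b.

Lemma holo_cont (f : R[i] -> R[i]) w : holo_rhp f -> 0 < complex.Re w ->
  forall eps, 0 < eps -> exists2 delta, 0 < delta &
    forall h, cabs h < delta -> cabs (f (w + h) - f w) < eps.
Proof.
move=> hf hw eps e0; have [L HL] := hf w hw.
have [d1 [d10 Hd1]] := HL 1 ltr01.
have L1 : 0 < cabs L + 1 by rewrite ltr_wpDl // cabs_ge0.
exists (Num.min d1 (eps / (cabs L + 1))).
  by rewrite lt_min d10 divr_gt0.
move=> h; rewrite lt_min => /andP[hd1 hd2].
have [->|h0] := eqVneq h 0.
  by rewrite addr0 subrr cabs0.
have := Hd1 h h0 hd1.
set q := (f (w + h) - f w) / h.
have -> : f (w + h) - f w = q * h by rewrite /q divfK.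
move=> Hq; rewrite cabsM.
have qle : cabs q <= cabs L + 1.
  have -> : q = (q - L) + L by rewrite subrK.
  apply: (le_trans (cabsD _ _)); rewrite addrC lerD2l; exact: ltW.
have hpos : 0 < cabs h.
  rewrite lt_def cabs_ge0 andbT; apply/eqP => /cabs_eq0 /eqP; exact/negP.
apply: (le_lt_trans (ler_wpM2r (cabs_ge0 h) qle)).
by rewrite mulrC -ltr_pdivlMr.
Qed.

Lemma holo_comp (a b : R) (f : R[i] -> R[i]) : 0 < a -> holo_rhp f -> holo_rhp (f \o phiab a b).
Proof.
move=> a0 hf w hw.
have hw' : 0 < complex.Re (phiab a b w).
  by case: w hw => x y /= hx; rewrite mul0r subr0 addr0 mulr_gt0.
have [L HL] := hf _ hw'.
exists (a%:C * L) => eps e0.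
have [d [d0 Hd]] := HL (eps / a) (divr_gt0 e0 a0).
exists (d / a); split; first exact: divr_gt0.
move=> h h0 hd.
have k0 : a%:C * h != 0.
  by rewrite mulf_neq0 // eq_complex /= eqxx andbT gt_eqF.
have kd : cabs (a%:C * h) < d.
  by rewrite cabsM cabsR gtr0_norm // mulrC -ltr_pdivlMr.
have H := Hd _ k0 kd.
have Ephi : phiab a b (w + h) = phiab a b w + a%:C * h.
  by rewrite /phiab mulrDr addrAC.
have -> : ((f \o phiab a b) (w + h) - (f \o phiab a b) w) / h - a%:C * L
  = a%:C * ((f (phiab a b w + a%:C * h) - f (phiab a b w)) / (a%:C * h) - L).
  rewrite /= Ephi invfM mulrBr; congr (_ - _).
  have a0' : a%:C != 0 :> R[i] by rewrite eq_complex /= eqxx andbT gt_eqF.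
  by field; rewrite h0.
by rewrite cabsM cabsR gtr0_norm // mulrC -ltr_pdivlMr.
Qed.
Lemma ReD (z w : R[i]) : complex.Re (z + w) = complex.Re z + complex.Re w.
Proof. by case: z; case: w. Qed.
Lemma Re1 : complex.Re (1 : R[i]) = 1.
Proof. by []. Qed.
Lemma cabs_geRe (z : R[i]) : complex.Re z <= cabs z.
Proof. exact: le_trans (ler_norm _) (cabs_Re z). Qed.
Lemma Re_neq0 (z : R[i]) : 0 < complex.Re z -> z != 0.
Proof. by move=> h; apply/eqP => z0; move: h; rewrite z0 ltxx. Qed.

Definition u0 (w : R[i]) : R[i] := (w + 1)^-1.

Lemma holo_u0 : holo_rhp u0.
Proof.
move=> w hw; exists (- ((w + 1) * (w + 1))^-1) => eps e0.
exists (Num.min (1/2) (eps / 2)); split.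
  by rewrite lt_min divr_gt0 //= divr_gt0.
move=> h h0; rewrite lt_min => /andP[h1 h2].
have Rw1 : 1 <= complex.Re (w + 1) by rewrite ReD Re1 lerDr ltW.
have w1 : w + 1 != 0 by apply: Re_neq0; exact: lt_le_trans Rw1.
have Rwh1 : 1/2 < complex.Re (w + h + 1).
  rewrite -addrA addrC ReD ReD Re1 -addrA.
  have : - complex.Re h < 1/2.
    apply: le_lt_trans h1; apply: le_trans (cabs_Re h).
    by rewrite -[X in _ <= X]normrN ler_norm.
  move=> H; have : 0 < complex.Re w by []. lra.
have wh1 : w + h + 1 != 0 by apply: Re_neq0; apply: lt_trans Rwh1.
have -> : (u0 (w + h) - u0 w) / h - - ((w + 1) * (w + 1))^-1
  = h * ((w + 1) * (w + 1))^-1 * (w + h + 1)^-1.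
  by rewrite /u0; field; rewrite h0 w1 wh1.
rewrite !cabsM !cabsV !cabsM.
have c1 : 1 <= cabs (w + 1) by apply: le_trans Rw1 (cabs_geRe _).
have c2 : 1/2 < cabs (w + h + 1) by apply: lt_le_trans Rwh1 (cabs_geRe _).
have i1 : (cabs (w + 1) * cabs (w + 1))^-1 <= 1.
  by rewrite invf_le1 ?mulr_gt0 ?(lt_le_trans ltr01) // mulr_ege1.
have i2 : (cabs (w + h + 1))^-1 <= 2.
  have cp : 0 < cabs (w + h + 1) by apply: lt_trans c2.
  rewrite invf_ple ?posrE //; lra.
have hp := cabs_ge0 h.
apply: (@le_lt_trans _ _ (cabs h * 1 * 2)).
  have c0 := cabs_ge0 (w + 1).
  apply: ler_pM => //; first by rewrite mulr_ge0 // invr_ge0 mulr_ge0.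
    by rewrite invr_ge0 cabs_ge0.
  by apply: ler_pM => //; rewrite invr_ge0 mulr_ge0.
rewrite mulr1; lra.
Qed.
End C.
Section I.
Variable R : realType.
Local Notation mu := (@lebesgue_measure R).
Local Open Scope ereal_scope.
Lemma dF (a b x : R) : is_derive x 1%R (fun y => a * y + b)%R a.
Proof. by apply: is_derive_eq; rewrite addr0 /GRing.scale /= mulr1. Qed.

Lemma cv_int (G : R -> R) (a b : R) : (0 < a)%R -> continuous G -> (forall x, 0 <= G x)%R ->
  \int[mu]_(y in [set: R]) (G (a * y + b)%R)%:E = (a^-1)%:E * \int[mu]_(y in [set: R]) (G y)%:E.
Proof.
move=> a0 cG G0.
set F := (fun y : R => a * y + b)%R.
have dFa y : (derive1 F y = a)%R by rewrite derive1E; apply: derive_val; exact: dF.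
have -> : \int[mu]_(y in [set: R]) (G y)%:E = \int[mu]_(y in [set: R]) (((G \o F) * derive1 F) y)%:E.
  apply: increasing_ge0_integration_by_substitutionT => //.
  - by move=> x y xy; rewrite /F ltrD2r ltr_pM2l.
  - by rewrite (_ : derive1 F = cst a); [exact: cst_continuous | apply/funext].
  - by rewrite (_ : derive1 F = cst a); [exact: is_cvg_cst | apply/funext].
  - by rewrite (_ : derive1 F = cst a); [exact: is_cvg_cst | apply/funext].
  - apply/cvgrNyPle => A; exists ((A - b) / a)%R; split; first by rewrite num_real.
    move=> x hx; rewrite /F -lerBrDr -ler_pdivlMl // mulrC; exact: ltW.
  - apply/cvgryPge => A; exists ((A - b) / a)%R; split; first by rewrite num_real.
    move=> x hx; rewrite /F -lerBlDr -ler_pdivrMl // mulrC; exact: ltW.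
have -> : \int[mu]_(y in [set: R]) (((G \o F) * derive1 F) y)%:E
   = \int[mu]_(y in [set: R]) (a%:E * (G (a * y + b)%R)%:E).
  apply: eq_integral => y _; rewrite -EFinM; congr (_%:E).
  have -> : ((G \o F) * derive1 F)%R y = (G (F y) * derive1 F y)%R by [].
  by rewrite dFa mulrC.
rewrite ge0_integralZl_EFin //; first last.
- exact: ltW.
- apply: measurableT_comp => //; apply: measurableT_comp; first exact: continuous_measurable_fun.
  by apply: measurable_funD => //; apply: measurable_funM.
- by move=> x _; rewrite lee_fin.
by rewrite muleA -EFinM mulVf ?gt_eqF // mul1e.
Qed.
Lemma int_oneDsqr : \int[mu]_(y in [set: R]) ((oneDsqr y)^-1)%:E = pi%:E.
Proof.
rewrite (@ge0_symfun_integralT _ (fun x : R => ((oneDsqr x)^-1)%R)).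
- rewrite -set_itvcy integral0y_oneDsqr -EFinM; congr (_%:E).
  by rewrite mulrC divfK // pnatr_eq0.
- by move=> x; rewrite invr_ge0 (le_trans ler01) // oneDsqr_ge1.
- exact: continuous_oneDsqrV.
- by move=> x /=; rewrite /oneDsqr sqrrN.
Qed.

Lemma int_c (c : R) : (0 < c)%R ->
  \int[mu]_(y in [set: R]) (((c ^+ 2 + y ^+ 2)^-1)%R)%:E = (pi / c)%:E.
Proof.
move=> c0.
have cn0 : c != 0%R by rewrite gt_eqF.
have -> : \int[mu]_(y in [set: R]) (((c ^+ 2 + y ^+ 2)^-1)%R)%:E
   = \int[mu]_(y in [set: R]) ((c ^+ 2)^-1%R%:E * ((oneDsqr (c^-1 * y + 0))^-1)%:E).
  apply: eq_integral => y _; rewrite -EFinM; congr (_%:E).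
  have h1 : (c ^+ 2 + y ^+ 2 != 0)%R.
    by rewrite gt_eqF // ltr_wpDr ?sqr_ge0 // exprn_gt0.
  have h2 : (oneDsqr (c^-1 * y + 0) != 0)%R.
    by rewrite gt_eqF // (lt_le_trans ltr01) // oneDsqr_ge1.
  move: h2; rewrite /oneDsqr => h2.
  by field; rewrite h1 cn0.
rewrite ge0_integralZl_EFin //; first last.
- by rewrite invr_ge0 sqr_ge0.
- apply: measurableT_comp => //.
  apply: (measurableT_comp (f := fun x : R => ((oneDsqr x)^-1)%R) (g := fun y : R => (c^-1 * y + 0)%R)).
    by apply: continuous_measurable_fun; exact: continuous_oneDsqrV.
  by apply: measurable_funD => //; apply: measurable_funM.
rewrite (@cv_int (fun x : R => ((oneDsqr x)^-1)%R)) //; first last.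
- exact: continuous_oneDsqrV.
- by rewrite invr_gt0.
rewrite int_oneDsqr invrK -!EFinM; congr (_%:E).
by field.
Qed.
End I.
Section N.
Variable R : realType.
Local Notation mu := (@lebesgue_measure R).

Definition Ix (f : R[i] -> R[i]) (x : R) : \bar R :=
  \int[mu]_(y in [set: R]) ((cabs (f (Complex x y))) ^+ 2)%:E.

Lemma cabs_im (d : R) : cabs (Complex 0 d) = `|d|.
Proof. by rewrite /cabs expr0n /= add0r sqrtr_sqr. Qed.

Lemma cont_abs_slice (f : R[i] -> R[i]) (c : R) : holo_rhp f -> 0 < c ->
  continuous (fun y : R => cabs (f (Complex c y))).
Proof.
move=> hf c0 y0; apply/cvgrPdist_lt => e e0.
have [d d0 Hd] := @holo_cont R f (Complex c y0) hf c0 e e0.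
apply/nbhs_ballP; exists d => // y /= hy.
have E : Complex c y = Complex c y0 + Complex 0 (y - y0).
  by rewrite compl_add addr0 addrC subrK.
have := Hd (Complex 0 (y - y0)); rewrite cabs_im -E => H.
have {}H : cabs (f (Complex c y) - f (Complex c y0)) < e.
  by apply: H; rewrite distrC; exact: hy.
apply: le_lt_trans H.
rewrite ler_norml; apply/andP; split.
  rewrite lerBrDl addrC -lerBrDl opprK.
  have := @cabsD _ (f (Complex c y) - f (Complex c y0)) (f (Complex c y0)).
  by rewrite subrK addrC.
rewrite lerBlDr.
have := @cabsD _ (f (Complex c y0) - f (Complex c y)) (f (Complex c y)).
rewrite subrK (_ : cabs (f (Complex c y0) - f (Complex c y)) = cabs (f (Complex c y) - f (Complex c y0))) //.
by rewrite -opprB cabsN.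
Qed.

Lemma cont_slice (f : R[i] -> R[i]) (c : R) : holo_rhp f -> 0 < c ->
  continuous (fun y : R => cabs (f (Complex c y)) ^+ 2).
Proof.
move=> hf c0 y.
have h1 := @cont_abs_slice f c hf c0 y.
have h2 := @exprn_continuous R 2 (cabs (f (Complex c y))).
have := continuous_comp h1 h2.
exact.
Qed.

Local Open Scope ereal_scope.

Lemma Ix_comp (a b : R) (f : R[i] -> R[i]) (x : R) : (0 < a)%R -> holo_rhp f -> (0 < x)%R ->
  Ix (f \o phiab a b) x = (a^-1)%:E * Ix f (a * x).
Proof.
move=> a0 hf x0; rewrite /Ix.
under eq_integral do rewrite /= /phiab phiE.
apply: (@cv_int _ (fun y => cabs (f (Complex (a * x) y)) ^+ 2)%R a b a0).
  by apply: cont_slice => //; rewrite mulr_gt0.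
by move=> y; rewrite sqr_ge0.
Qed.

Lemma H2norm2E (f : R[i] -> R[i]) : H2norm2 f = ereal_sup [set (pi^-1)%:E * Ix f x | x in [set x : R | (0 < x)%R]].
Proof. by []. Qed.

Lemma H2norm2_comp (a b : R) (f : R[i] -> R[i]) : (0 < a)%R -> holo_rhp f ->
  H2norm2 (f \o phiab a b) = (a^-1)%:E * H2norm2 f.
Proof.
move=> a0 hf; rewrite !H2norm2E -ereal_sup_pZl ?invr_gt0 //; congr ereal_sup.
apply/seteqP; split => e /=.
  move=> [x x0 <-]; exists ((pi^-1)%:E * Ix f (a * x)).
    by exists (a * x)%R => //; rewrite /= mulr_gt0.
  by rewrite Ix_comp // muleCA.
move=> [_ [x x0 <-] <-].
exists (x / a)%R; first by rewrite /= divr_gt0.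
by rewrite Ix_comp ?divr_gt0 // muleCA mulrC divfK ?gt_eqF.
Qed.

Lemma H2norm2_ge0 (f : R[i] -> R[i]) : 0 <= H2norm2 f.
Proof.
rewrite H2norm2E; apply: le_trans (ereal_sup_ubound _); last first.
  by exists 1%R => //=; exact: ltr01.
apply: mule_ge0; first by rewrite lee_fin invr_ge0 pi_ge0.
by apply: integral_ge0 => y _; rewrite lee_fin sqr_ge0.
Qed.

Lemma H2_fin (f : R[i] -> R[i]) : H2 f -> H2norm2 f = (fine (H2norm2 f))%:E.
Proof.
case=> _ hf; rewrite fineK //; rewrite ge0_fin_numE //; exact: H2norm2_ge0.
Qed.

Lemma H2_comp (a b : R) (f : R[i] -> R[i]) : (0 < a)%R -> H2 f ->
  H2 (f \o phiab a b) /\ H2norm (f \o phiab a b) = (Num.sqrt (a^-1) * H2norm f)%R.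
Proof.
move=> a0 hf; have hf' := hf; case: hf' => hol fin.
have E := H2_fin hf.
have E2 : H2norm2 (f \o phiab a b) = (a^-1 * fine (H2norm2 f))%:E.
  by rewrite H2norm2_comp // {1}E.
split; first split.
- exact: holo_comp.
- by rewrite E2 ltry.
rewrite /H2norm E2 /= sqrtrM // invr_ge0 ltW //.
Qed.

Lemma Ix_u0 (x : R) : (0 < x)%R -> Ix (@u0 R) x = (pi / (x + 1))%:E.
Proof.
move=> x0; rewrite /Ix -int_c ?ltr_wpDl ?ltW //.
apply: eq_integral => y _; congr (_%:E).
rewrite /u0 (_ : (Complex x y + 1 = Complex (x + 1) y)%R); last first.
  by apply/eqP; rewrite eq_complex /= addr0 !eqxx.
by rewrite cabsV exprVn cabs2.
Qed.

Lemma H2norm2_u0 : H2norm2 (@u0 R) = 1.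
Proof.
have E x : (0 < x)%R -> (pi^-1)%:E * Ix (@u0 R) x = ((x + 1)^-1)%:E.
  move=> x0; rewrite Ix_u0 // -EFinM; congr (_%:E).
  by rewrite mulrA mulVf ?mul1r // gt_eqF // pi_gt0.
apply/eqP; rewrite eq_le; apply/andP; split.
  apply: ge_ereal_sup => _ [x x0 <-]; rewrite E // lee_fin invf_le1 ?ltr_wpDl ?ltW //.
  by rewrite ltrDr.
apply/lee_addgt0Pr => e e0.
have : ((e + 1)^-1)%:E <= H2norm2 (@u0 R).
  by apply: ereal_sup_ubound; exists e => //; rewrite E.
move=> H; apply: le_trans (leeD2r _ H).
rewrite -EFinD lee_fin.
have e1 : (0 < e + 1)%R by rewrite ltr_wpDr ?ltW.
rewrite -(@ler_pM2r _ (e + 1)%R) // mulrDl mulVf ?gt_eqF // mul1r.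
nra.
Qed.
End N.
Section M.
Variable R : realType.

Lemma bern (k : R) (n : nat) : 1 <= k -> 1 + n%:R * (k - 1) <= k ^+ n.
Proof.
move=> k1; elim: n => [|n IH]; first by rewrite mul0r addr0 expr0.
rewrite exprS.
have k0 : 0 <= k - 1 by rewrite subr_ge0.
apply: le_trans (ler_wpM2l (le_trans ler01 k1) IH).
rewrite -natr1.
have := mulr_ge0 k0 (mulr_ge0 (ler0n _ n) k0).
nra.
Qed.

Lemma pow_big (k : R) : 1 < k -> exists n : nat, 2 <= k ^+ n.
Proof.
move=> k1.
have k0 : 0 < k - 1 by rewrite subr_gt0.
have ki : 0 <= (k - 1)^-1 by rewrite invr_ge0 ltW.
have := @archi_boundP _ ((k - 1)^-1) ki.
set m := Num.Def.archi_bound _ => hm.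
exists m; apply: le_trans (bern m (ltW k1)).
have : 1 <= m%:R * (k - 1).
  by rewrite -ler_pdivrMr // div1r ltW.
lra.
Qed.

Lemma iter_norm (X : set (R[i] -> R[i])) (N : (R[i] -> R[i]) -> R) U (k : R) :
  (forall f, X f -> X (U f) /\ N (U f) = k * N f) ->
  forall n z, X z -> X (iter n U z) /\ N (iter n U z) = k ^+ n * N z.
Proof.
move=> HU; elim=> [|n IH] z Xz; first by rewrite expr0 mul1r.
have [X1 N1] := IH z Xz; have [X2 N2] := HU _ X1.
by rewrite iterS; split => //; rewrite N2 N1 exprS mulrA.
Qed.

Lemma phi_inv (a b : R) (w : R[i]) : 0 < a ->
  phiab a b (phiab a^-1 (- (b / a)) w) = w /\ phiab a^-1 (- (b / a)) (phiab a b w) = w.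
Proof.
move=> a0; have an : a != 0 by rewrite gt_eqF.
case: w => x y; rewrite /phiab !phiE; split; congr Complex; by field.
Qed.

Lemma u0_unit : H2 (@u0 R) /\ H2norm (@u0 R) = 1.
Proof.
split; first split.
- exact: holo_u0.
- by rewrite H2norm2_u0 ltry.
by rewrite /H2norm H2norm2_u0 /= sqrtr1.
Qed.
End M.

Unset Implicit Arguments.
Theorem theorem3p6 (R : realType) (a b : R) (ha : 0 < a) :
  let phi := fun w : R[i] => (a%:C)%C * w + (Complex 0 b) in
  let T := Cop phi in
  invertible_op (@H2 R) (@H2norm R) T /\
  ((expansive (@H2 R) (@H2norm R) T <-> uniformly_expansive (@H2 R) (@H2norm R) T) /\
   (uniformly_expansive (@H2 R) (@H2norm R) T <-> a != 1)).
Proof.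
move=> phi T.
pose T' := Cop (phiab a^-1 (- (b / a))).
have HT f : H2 f -> H2 (T f) /\ H2norm (T f) = Num.sqrt (a^-1) * H2norm f.
  exact: (H2_comp b ha).
have HT' f : H2 f -> H2 (T' f) /\ H2norm (T' f) = Num.sqrt a * H2norm f.
  have hai : 0 < a^-1 by rewrite invr_gt0.
  by have := H2_comp (- (b / a)) hai (f := f); rewrite invrK.
have inv1 f : T' (T f) = f.
  apply/funext => w; rewrite /T /T' /Cop /=; congr f; exact: (phi_inv b w ha).1.
have inv2 f : T (T' f) = f.
  apply/funext => w; rewrite /T /T' /Cop /=; congr f; exact: (phi_inv b w ha).2.
have invT' : inverse_on (@H2 R) T T'.
  by split; [move=> f Xf; exact: (HT' f Xf).1 | move=> f _; split].
have SE S : inverse_on (@H2 R) T S -> forall f, H2 f -> S f = T' f.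
  move=> [_ HS] f Xf; have X' := (HT' f Xf).1.
  by rewrite -{1}(inv2 f) (HS _ X').1.
have iterS' S : inverse_on (@H2 R) T S -> forall n z, H2 z ->
    H2 (iter n S z) /\ H2norm (iter n S z) = Num.sqrt a ^+ n * H2norm z.
  move=> HS; apply: iter_norm => f Xf; rewrite (SE S HS f Xf); exact: HT'.
have iterT := iter_norm HT.
have [Xu Nu] := @u0_unit R.
have UE : a != 1 -> uniformly_expansive (@H2 R) (@H2norm R) T.
  move=> a1 S HS; have [alt|agt|aeq] := ltgtP a 1; last by rewrite aeq eqxx in a1.
  + have c1 : 1 < Num.sqrt (a^-1).
      by rewrite -sqrtr1 ltr_sqrt ?invr_gt0 // invf_gt1.
    have [n hn] := pow_big c1; exists n => z Xz Nz; left.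
    by rewrite (iterT n z Xz).2 Nz mulr1.
  + have c1 : 1 < Num.sqrt a by rewrite -sqrtr1 ltr_sqrt.
    have [n hn] := pow_big c1; exists n => z Xz Nz; right.
    by rewrite (iterS' S HS n z Xz).2 Nz mulr1.
have a1c : a = 1 -> Num.sqrt (a^-1) = 1 /\ Num.sqrt a = 1.
  by move=> ->; rewrite invr1 sqrtr1.
have Ex_a1 : expansive (@H2 R) (@H2norm R) T -> a != 1.
  move=> E; apply/eqP => a1; have [c1 c2] := a1c a1.
  have [n hn] := E T' invT' _ Xu Nu.
  move: hn; case: n => k /=.
    by rewrite (iterT k _ Xu).2 c1 expr1n Nu mulr1; lra.
  by rewrite (iterS' T' invT' k.+1 _ Xu).2 c2 expr1n Nu mulr1; lra.
have UE_a1 : uniformly_expansive (@H2 R) (@H2norm R) T -> a != 1.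
  move=> E; apply/eqP => a1; have [c1 c2] := a1c a1.
  have [n hn] := E T' invT'.
  case: (hn _ Xu Nu).
    by rewrite (iterT n _ Xu).2 c1 expr1n Nu mulr1; lra.
  by rewrite (iterS' T' invT' n _ Xu).2 c2 expr1n Nu mulr1; lra.
split.
  split.
  - by move=> f Xf; exact: (HT f Xf).1.
  - by [].
  - by exists (Num.sqrt (a^-1)) => f Xf; rewrite (HT f Xf).2.
  - exists T'; split => //.
    by exists (Num.sqrt a) => f Xf; rewrite (HT' f Xf).2.
split; last by split; [exact: UE_a1 | exact: UE].
split; first by move/Ex_a1; exact: UE.
move=> E S HS z Xz Nz; have [n hn] := E S HS.
case: (hn z Xz Nz) => H; first by exists (Posz n).
move: H; case: n {hn} => [|k] H; first by move: H; rewrite /= Nz; lra.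
by exists (Negz k).
Qed.
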